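(* Let $n\ge2$ and let $\mathcal G_n$, $\mathcal N_{0,n}$, $z_g$, $U_m(z_g)$ be as in the context. Let $D=\Theta((\gamma,g,\mu),C(\mu\eta))$ be a compact open bisection in $\mathcal G_n$ ($\gamma,\mu,\eta\in X^*$, $g\in\mathfrak G_n$). If $[(\varnothing,e,\varnothing),\mathbf 1^\infty]\in\overline D$, then there exist $m_D\in\mathbb N$ and $g_D\in\mathcal N_{0,n}$ such that $$D\cap\Bigl(\bigcup_{h\in\mathcal N_{0,n}}U_{m_D}(z_h)\Bigr)=U_{m_D}(z_{g_D}).$$
   Context: Let $X=\{\mathbf 0,\mathbf 1\}$, $X^*$ the finite words (with empty word $\varnothing$), $X^\omega$ the infinite words, $C(\eta)=\{\eta w:w\in X^\omega\}$, $\mathbf 1^m$ and $\mathbf 1^\infty$ the finite/infinite words of ones. Fix $n\ge2$, a primitive polynomial $f_n$ of degree $n$ over $\mathbb F_2$ with root $\alpha$, and $\operatorname{Tr}(\beta)=\beta+\beta^2+\dots+\beta^{2^{n-1}}\in\mathbb F_2$. $\mathfrak G_n$ is the group of automorphisms of the binary rooted tree $X^*$ generated by $a$ ($a\cdot(\mathbf 0w)=\mathbf 1w$, $a\cdot(\mathbf 1w)=\mathbf 0w$) and $\iota_n(\beta)$, $\beta\in\mathbb F_{2^n}$, where $\iota_n(\beta)\cdot(\mathbf 0w)=\mathbf 0(a^{\operatorname{Tr}(\beta)}\cdot w)$, $\iota_n(\beta)\cdot(\mathbf 1w)=\mathbf 1(\iota_n(\alpha\beta)\cdot w)$; restrictions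 $g|_x$ are given by $g\cdot(xw)=(g\cdot x)(g|_x\cdot w)$. $\mathcal N_{0,n}=\iota_n(\mathbb F_{2^n})$ and $e=\iota_n(0)$ is the identity. $\mathcal G_n$ is the groupoid of germs of the action of the inverse semigroup $\{(\eta,g,\mu)\}\cup\{0\}$ on $X^\omega$ with $(\eta,g,\mu):C(\mu)\to C(\eta)$, $\mu w\mapsto\eta(g\cdot w)$; germs $[(\eta,g,\mu),w]$, $w\in C(\mu)$, with $[(\eta,g,\mu),w]=[(\eta',g',\mu'),w']$ iff $w=w'$ and some finite prefix $\nu=\mu\epsilon=\mu'\epsilon'$ of $w$ satisfies $\eta(g\cdot\epsilon)=\eta'(g'\cdot\epsilon')$ and $g|_\epsilon=g'|_{\epsilon'}$. $\Theta(s,U)=\{[s,w]:w\in U\}$ for $s=(\eta,g,\mu)$, $U\subseteq C(\mu)$ open; these form a basis of the topology. $z_g=[(\varnothing,g,\varnothing),\mathbf 1^\infty]$ and $U_m(z_g)=\Theta((\varnothing,g,\varnothing),C(\mathbf 1^m))$. *)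

(* Defs.v *)
From mathcomp Require Import all_boot all_order all_algebra all_field.
Set Implicit Arguments. Unset Strict Implicit. Unset Printing Implicit Defensive.
Import GRing.Theory.
Local Open Scope ring_scope.

(* Alphabet X = bool : letter 0 = false, letter 1 = true.
   Finite words X^* = seq bool, infinite words X^omega = nat -> bool. *)

(* The field F_{2^n} is an abstract finite field F of characteristic 2 with
   #|F| = 2^n; alpha is a root of a primitive polynomial of degree n,
   i.e. a generator of the multiplicative group (primitive (2^n-1)-th root). *)

Definition trace (F : finFieldType) (n : nat) (b : F) : F :=
  \sum_(i < n) b ^+ (2 ^ i).

Definition a_act (w : seq bool) : seq bool :=
  match w with [::] => [::] | x :: w' => (~~ x) :: w' end.

Fixpoint iota_act (F : finFieldType) (n : nat) (alpha : F) (b : F)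
  (w : seq bool) : seq bool :=
  match w with
  | [::] => [::]
  | false :: w' => false :: (if trace n b == 1 then a_act w' else w')
  | true :: w' => true :: iota_act n alpha (alpha * b) w'
  end.

Inductive inGn (F : finFieldType) (n : nat) (alpha : F) :
    (seq bool -> seq bool) -> Prop :=
  | Gn_id : inGn n alpha id
  | Gn_a : inGn n alpha a_act
  | Gn_iota b : inGn n alpha (iota_act n alpha b)
  | Gn_comp f g : inGn n alpha f -> inGn n alpha g -> inGn n alpha (f \o g)
  | Gn_inv f g : inGn n alpha f -> cancel f g -> cancel g f -> inGn n alpha g
  | Gn_ext f g : inGn n alpha f -> f =1 g -> inGn n alpha g.

(* Restriction g|_x : g(x w) = (g x)(g|_x w). *)
Definition restr (g : seq bool -> seq bool) (x : seq bool) : seq bool -> seq bool :=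
  fun w => drop (size x) (g (x ++ w)).

Definition pref (w : nat -> bool) (k : nat) : seq bool := mkseq w k.

Definition cyl (eta : seq bool) : (nat -> bool) -> Prop :=
  fun w => pref w (size eta) = eta.

Definition cantor_open (U : (nat -> bool) -> Prop) : Prop :=
  forall w, U w -> exists k, forall w', cyl (pref w k) w' -> U w'.

(* Inverse semigroup elements (eta, g, mu) (the zero is not needed: it has
   empty domain and contributes no germs). *)
Record triple := Triple { t_eta : seq bool; t_g : seq bool -> seq bool;
                          t_mu : seq bool }.

Definition valid_triple (F : finFieldType) (n : nat) (alpha : F) (s : triple) :=
  inGn n alpha (t_g s).

Record germ := Germ { g_s : triple; g_w : nat -> bool }.

Definition valid_germ (F : finFieldType) (n : nat) (alpha : F) (x : germ) :=
  valid_triple n alpha (g_s x) /\ cyl (t_mu (g_s x)) (g_w x).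

Definition germ_eq (x y : germ) : Prop :=
  g_w x =1 g_w y /\
  exists k : nat,
    let nu := pref (g_w x) k in
    let mu := t_mu (g_s x) in let mu' := t_mu (g_s y) in
    let eps := drop (size mu) nu in let eps' := drop (size mu') nu in
    [/\ mu ++ eps = nu, mu' ++ eps' = nu,
        t_eta (g_s x) ++ t_g (g_s x) eps = t_eta (g_s y) ++ t_g (g_s y) eps'
      & restr (t_g (g_s x)) eps =1 restr (t_g (g_s y)) eps'].

Definition Theta (F : finFieldType) (n : nat) (alpha : F) (s : triple)
    (U : (nat -> bool) -> Prop) : germ -> Prop :=
  fun x => valid_germ n alpha x /\
    exists w, U w /\ cyl (t_mu s) w /\ germ_eq x (Germ s w).

Definition gopen (F : finFieldType) (n : nat) (alpha : F) (O : germ -> Prop) :=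
  forall x, O x -> exists s U,
    [/\ valid_triple n alpha s, cantor_open U,
        (forall w, U w -> cyl (t_mu s) w),
        Theta n alpha s U x & forall y, Theta n alpha s U y -> O y].

Definition gclosure (F : finFieldType) (n : nat) (alpha : F) (D : germ -> Prop)
    : germ -> Prop :=
  fun x => valid_germ n alpha x /\
    forall O, gopen n alpha O -> O x -> exists y, O y /\ D y.

Definition ones : nat -> bool := fun _ => true.
Definition ones_m (m : nat) : seq bool := nseq m true.

Definition z_ (g : seq bool -> seq bool) : germ := Germ (Triple [::] g [::]) ones.

Definition U_ (F : finFieldType) (n : nat) (alpha : F) (m : nat)
    (g : seq bool -> seq bool) : germ -> Prop :=
  Theta n alpha (Triple [::] g [::]) (cyl (ones_m m)).

(* Main.v *)
Require Import Defs.
From mathcomp Require Import all_boot all_order all_algebra all_field.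
From Stdlib Require Import FunctionalExtensionality.
Set Implicit Arguments. Unset Strict Implicit. Unset Printing Implicit Defensive.
Import GRing.Theory.
Local Open Scope ring_scope.

Section Trace.
Variables (F : finFieldType) (n : nat).
Hypothesis hchar : (2 \in [pchar F])%N.
Hypothesis hcard : #|F| = (2 ^ n)%N.
Hypothesis hn : (2 <= n)%N.

Lemma frob2 (x y : F) i : (x + y) ^+ (2 ^ i) = x ^+ (2 ^ i) + y ^+ (2 ^ i).
Proof.
elim: i => [|i IH]; first by rewrite !expr1.
rewrite expnSr !exprM IH sqrrD -mulr_natr (pcharf0 hchar) mulr0 addr0.
by [].
Qed.

Lemma sq_sum k (f : 'I_k -> F) : (\sum_(i < k) f i) ^+ 2 = \sum_(i < k) f i ^+ 2.
Proof.
elim: k f => [|k IH] f; first by rewrite !big_ord0 expr0n.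
rewrite !big_ord_recr /= -IH.
by have := frob2 (\sum_(i < k) f (widen_ord (leqnSn k) i)) (f ord_max) 1; rewrite expn1.
Qed.

Lemma trace_add (x y : F) : trace n (x + y) = trace n x + trace n y.
Proof. by rewrite /trace -big_split; apply: eq_bigr => i _; apply: frob2. Qed.

Lemma trace_sq (x : F) : trace n x ^+ 2 = trace n x.
Proof.
rewrite /trace sq_sum.
have -> : \sum_(i < n) (x ^+ (2 ^ i)) ^+ 2 = \sum_(i < n) x ^+ (2 ^ i.+1).
  by apply: eq_bigr => i _; rewrite -exprM expnSr.
case: n hn hcard => [|k] // _ hc.
rewrite big_ord_recr big_ord_recl /= -hc expf_card expn0 expr1 addrC.
by [].
Qed.

Lemma trace01 (x : F) : trace n x = 0 \/ trace n x = 1.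
Proof.
have h := trace_sq x.
have : trace n x * (trace n x - 1) = 0 by rewrite mulrBr mulr1 -expr2 h subrr.
move/eqP; rewrite mulf_eq0 => /orP [/eqP -> | ]; first by left.
by rewrite subr_eq0 => /eqP ->; right.
Qed.

Lemma one_one : (1 + 1 : F) = 0.
Proof. by have := pcharf0 hchar. Qed.

Lemma tb_add (x y : F) :
  (trace n (x + y) == 1) = (trace n x == 1) (+) (trace n y == 1).
Proof.
rewrite trace_add.
have h10 : ((0 : F) == 1) = false by rewrite eq_sym oner_eq0.
case: (trace01 x) => ->; case: (trace01 y) => ->;
  rewrite ?addr0 ?add0r ?one_one ?eqxx ?h10 //.
Qed.

End Trace.

Definition TA (g : seq bool -> seq bool) :=
  (forall u, size (g u) = size u) /\ (forall u v, take (size u) (g (u ++ v)) = g u).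

Lemma TA_cat g u v : TA g -> g (u ++ v) = g u ++ restr g u v.
Proof. by case=> _ h; rewrite /restr -{1}(cat_take_drop (size u) (g (u ++ v))) h. Qed.

Lemma restr_cat g u v : restr g (u ++ v) = restr (restr g u) v.
Proof.
by apply: functional_extensionality => w; rewrite /restr drop_drop size_cat catA addnC.
Qed.

Lemma restr_nil g : restr g [::] = g.
Proof. by apply: functional_extensionality => w; rewrite /restr drop0. Qed.

Lemma restr_comp f g u : TA f -> TA g -> restr (f \o g) u = restr f (g u) \o restr g u.
Proof.
move=> Hf Hg; apply: functional_extensionality => w.
rewrite {1}/restr /= (TA_cat _ _ Hg) (TA_cat _ _ Hf) drop_size_cat //.
by rewrite Hf.1 Hg.1.
Qed.

Lemma TA_restr g u : TA g -> TA (restr g u).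
Proof.
move=> Hg.
have s1 : forall v, size (restr g u v) = size v.
  by move=> v; rewrite /restr size_drop Hg.1 size_cat addKn.
split => // v w.
rewrite {1}/restr catA (TA_cat (u ++ v) _ Hg).
have -> : g (u ++ v) = g u ++ restr g u v by rewrite (TA_cat _ _ Hg).
by rewrite -catA drop_size_cat ?Hg.1 // take_size_cat.
Qed.

Lemma TA_comp f g : TA f -> TA g -> TA (f \o g).
Proof.
move=> Hf Hg; split; first by move=> u /=; rewrite Hf.1 Hg.1.
move=> u v /=; rewrite (TA_cat _ _ Hg) (TA_cat _ _ Hf) take_size_cat //.
by rewrite Hf.1 Hg.1.
Qed.

Lemma TA_id : TA id.
Proof. by split=> // u v; rewrite take_size_cat. Qed.

Lemma TA_a : TA a_act.
Proof. split; [by case | case=> [|x u] v /=; [by rewrite take0 | by rewrite take_size_cat]]. Qed.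

Lemma TA_if (t : bool) : TA (if t then a_act else id).
Proof. by case: t; [exact: TA_a | exact: TA_id]. Qed.

Lemma TA_inv f g : TA f -> cancel f g -> cancel g f -> TA g.
Proof.
move=> Hf fg gf; split.
  by move=> u; rewrite -{2}(gf u) Hf.1.
move=> u v; set x := g (u ++ v).
have sx : size x = (size u + size v)%N by rewrite -size_cat -(gf (u ++ v)) Hf.1.
have st : size (take (size u) x) = size u by rewrite size_takel // sx leq_addr.
have h := Hf.2 (take (size u) x) (drop (size u) x).
rewrite cat_take_drop st {1}/x gf take_size_cat // in h.
by rewrite [in RHS]h fg.
Qed.

Lemma cat_inj (s t1 t2 : seq bool) : s ++ t1 = s ++ t2 -> t1 = t2.
Proof. by move=> h; have := f_equal (drop (size s)) h; rewrite !drop_size_cat. Qed.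

Section Words.
Variables (F : finFieldType) (n : nat) (alpha : F).
Hypothesis hchar : (2 \in [pchar F])%N.
Hypothesis hcard : #|F| = (2 ^ n)%N.
Hypothesis hn : (2 <= n)%N.

Local Notation I := (iota_act n alpha).
Definition aif (b : F) : seq bool -> seq bool := if trace n b == 1 then a_act else id.

Lemma iota_false b w : I b (false :: w) = false :: aif b w.
Proof. by rewrite /aif /=; case: ifP. Qed.

Lemma iota_true b w : I b (true :: w) = true :: I (alpha * b) w.
Proof. by []. Qed.

Lemma TA_iota b : TA (I b).
Proof.
split.
  move=> u; elim: u b => [|[] u IH] b //=; first by rewrite IH.
  by case: ifP => // _; case: u {IH}.
move=> u v; elim: u b => [|[] u IH] b /=; first by rewrite take0.
  by rewrite IH.
by case: ifP => _; [rewrite (TA_a).2 | rewrite take_size_cat].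
Qed.

Lemma trace0 : trace n (0 : F) = 0.
Proof. by rewrite /trace big1 // => i _; rewrite expr0n expn_eq0. Qed.

Lemma I0 : I 0 = id.
Proof.
apply: functional_extensionality => w; elim: w => [|[] w IH] //=.
  by rewrite mulr0 IH.
by rewrite trace0 eq_sym oner_eq0.
Qed.

Lemma aa w : a_act (a_act w) = w.
Proof. by case: w => // x w /=; rewrite negbK. Qed.

Lemma II b c w : I b (I c w) = I (b + c) w.
Proof.
elim: w b c => [|[] w IH] b c //=.
  by rewrite IH mulrDr.
rewrite (tb_add hchar hcard hn).
by case: (trace n b == 1); case: (trace n c == 1) => //=; rewrite aa.
Qed.

Lemma IIself b w : I b (I b w) = w.
Proof.
rewrite II.
have -> : b + b = 0 by rewrite -mulr2n -mulr_natr (pcharf0 hchar) mulr0.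
by rewrite I0.
Qed.

Lemma restr_I_true b : restr (I b) [:: true] = I (alpha * b).
Proof. by apply: functional_extensionality => w; rewrite /restr /= drop0. Qed.

Lemma restr_I_false b : restr (I b) [:: false] = aif b.
Proof. by apply: functional_extensionality => w; rewrite /restr iota_false /= drop0. Qed.

Lemma restr_a u : u <> [::] -> restr a_act u = id.
Proof.
case: u => // x u _; apply: functional_extensionality => w.
by rewrite /restr /= drop_size_cat.
Qed.

Lemma restr_id u : restr id u = id.
Proof. by apply: functional_extensionality => w; rewrite /restr drop_size_cat. Qed.

Definition S h := (exists b, h = I b) \/ h = a_act.
Definition N0 h := S h \/ exists b, h = a_act \o I b \/ h = I b \o a_act.

Lemma S_id : S id.
Proof. by left; exists 0; rewrite I0. Qed.

Lemma S_restr h u : S h -> S (restr h u).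
Proof.
elim: u h => [|x u IH] h Sh; first by rewrite restr_nil.
rewrite -cat1s restr_cat; apply: IH.
case: Sh => [[b ->]|->].
  case: x; first by rewrite restr_I_true; left; eexists.
  by rewrite restr_I_false /aif; case: ifP => _; [right | exact: S_id].
by rewrite restr_a //; exact: S_id.
Qed.

Lemma S_TA h : S h -> TA h.
Proof. by case=> [[b ->]|->]; [exact: TA_iota | exact: TA_a]. Qed.

Lemma N0_TA h : N0 h -> TA h.
Proof.
case; first exact: S_TA.
by case=> b [->|->]; apply: TA_comp; (exact: TA_a || exact: TA_iota).
Qed.

Lemma S_N0 h : S h -> N0 h.
Proof. by left. Qed.

Lemma N0_restr h u : N0 h -> u <> [::] -> S (restr h u).
Proof.
case: u => // x u Nh _; rewrite -cat1s restr_cat; apply: S_restr.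
case: Nh => [Sh|[b [->|->]]]; first exact: S_restr.
  rewrite restr_comp; [|exact: TA_a|exact: TA_iota].
  rewrite restr_a; last by case: x.
  have -> : id \o restr (I b) [:: x] = restr (I b) [:: x] by [].
  by apply: S_restr; left; eexists.
rewrite restr_comp; [|exact: TA_iota|exact: TA_a].
rewrite restr_a //.
have -> : restr (I b) (a_act [:: x]) \o id = restr (I b) (a_act [:: x]) by [].
by apply: S_restr; left; eexists.
Qed.

Lemma SS_N0 x y : S x -> S y -> N0 (x \o y).
Proof.
case=> [[b ->]|->]; case=> [[c ->]|->].
- left; left; exists (b + c); apply: functional_extensionality => w; exact: II.
- by right; exists b; right.
- by right; exists c; left.
- have -> : a_act \o a_act = id by apply: functional_extensionality => w; exact: aa.
  by left; exact: S_id.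
Qed.

Lemma N0_comp_restr x y u : N0 x -> N0 y -> u <> [::] -> N0 (restr (x \o y) u).
Proof.
move=> Nx Ny hu; rewrite restr_comp; [|exact: N0_TA|exact: N0_TA].
apply: SS_N0; last exact: N0_restr.
apply: N0_restr => //.
move=> h0; apply: hu; apply/nilP; rewrite /nilp -(N0_TA Ny).1 h0 //.
Qed.

Lemma N0_inv h k : N0 h -> (forall w, h (k w) = w) -> N0 k.
Proof.
move=> Nh hk.
suff [h' [Nh' h'h]] : exists h', N0 h' /\ forall w, h' (h w) = w.
  have -> : k = h'; last by [].
  by apply: functional_extensionality => w; rewrite -{2}(hk w) h'h.
case: Nh => [[[b ->]|->]|[b [->|->]]].
- by exists (I b); split; [left; left; eexists | exact: IIself].
- by exists a_act; split; [left; right | exact: aa].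
- exists (I b \o a_act); split; first by right; exists b; right.
  by move=> w /=; rewrite aa IIself.
- exists (a_act \o I b); split; first by right; exists b; left.
  by move=> w /=; rewrite IIself aa.
Qed.

Definition Inv g := TA g /\ exists R, forall u, (R <= size u)%N -> N0 (restr g u).

Lemma Inv_Gn g : inGn n alpha g -> Inv g.
Proof.
elim=> {g}.
- split; first exact: TA_id.
  by exists 0%N => u _; rewrite restr_id; left; exact: S_id.
- split; first exact: TA_a.
  exists 1%N => u hu; rewrite restr_a; first by left; exact: S_id.
  by case: u hu.
- move=> b; split; first exact: TA_iota.
  by exists 0%N => u _; left; apply: S_restr; left; eexists.
- move=> f g _ [Tf [Rf Hf]] _ [Tg [Rg Hg]]; split; first exact: TA_comp.
  exists (maxn Rf Rg).+1 => u hu.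
  set M := maxn Rf Rg.
  rewrite -(cat_take_drop M u) restr_cat restr_comp //.
  have sz : size (take M u) = M by rewrite size_takel // ltnW.
  apply: N0_comp_restr.
  + by apply: Hf; rewrite Tg.1 sz leq_maxl.
  + by apply: Hg; rewrite sz leq_maxr.
  + move=> h0; have := f_equal size h0; rewrite size_drop /=.
    by move/eqP; rewrite subn_eq0 leqNgt hu.
- move=> f g _ [Tf [Rf Hf]] fg gf.
  have Tg := TA_inv Tf fg gf.
  split => //; exists Rf => u hu.
  apply: (@N0_inv (restr f (g u))); first by apply: Hf; rewrite Tg.1.
  move=> w; rewrite {1}/restr -(TA_cat _ _ Tg) gf drop_size_cat //.
  by rewrite Tg.1.
- move=> f g _ IH e.
  have -> : g = f by apply: functional_extensionality => w; rewrite e.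
  exact: IH.
Qed.

End Words.

Definition pre (s : triple) (nu : seq bool) :=
  t_mu s ++ drop (size (t_mu s)) nu = nu.
Definition val (s : triple) (nu : seq bool) :=
  (t_eta s ++ t_g s (drop (size (t_mu s)) nu), restr (t_g s) (drop (size (t_mu s)) nu)).

Definition GP (x y : germ) k :=
  let nu := pref (g_w x) k in
  [/\ pre (g_s x) nu, pre (g_s y) nu & val (g_s x) nu = val (g_s y) nu].

Lemma germ_eqP x y : germ_eq x y <-> g_w x =1 g_w y /\ exists k, GP x y k.
Proof.
split.
  case=> e [k [h1 h2 h3 h4]]; split=> //; exists k; split=> //.
  by rewrite /val h3 (functional_extensionality _ _ h4).
case=> e [k [h1 h2 h3]]; split=> //; exists k; split=> //.
  by case: h3.
by case: h3 => _ ->.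
Qed.

Lemma pref_ext w w' k : w =1 w' -> pref w k = pref w' k.
Proof. by move=> e; rewrite /pref (eq_mkseq e). Qed.

Lemma pref_take w k k' : (k <= k')%N -> take k (pref w k') = pref w k.
Proof. by move=> h; rewrite /pref /mkseq -map_take take_iota (minn_idPl h). Qed.

Lemma pref_split w k k' : (k <= k')%N -> pref w k' = pref w k ++ drop k (pref w k').
Proof. by move=> h; rewrite -(pref_take w h) cat_take_drop. Qed.

Lemma cyl_ext s w w' : w =1 w' -> cyl s w -> cyl s w'.
Proof. by move=> e; rewrite /cyl (pref_ext _ e). Qed.

Lemma mkseq_true m : mkseq (fun _ => true) m = nseq m true.
Proof.
apply: (@eq_from_nth _ false); rewrite ?size_mkseq ?size_nseq // => i hi.
by rewrite nth_mkseq // nth_nseq hi.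
Qed.

Lemma pre_ext s nu d : TA (t_g s) -> pre s nu ->
  pre s (nu ++ d) /\
  val s (nu ++ d) = ((val s nu).1 ++ (val s nu).2 d, restr (val s nu).2 d).
Proof.
rewrite /pre /val => T hp.
have hd : drop (size (t_mu s)) (nu ++ d) = drop (size (t_mu s)) nu ++ d.
  by rewrite -{1}hp -catA drop_size_cat.
rewrite hd; split; first by rewrite catA hp.
by rewrite /= (TA_cat _ _ T) catA restr_cat.
Qed.

Lemma GP_mono x y k k' : TA (t_g (g_s x)) -> TA (t_g (g_s y)) ->
  (k <= k')%N -> GP x y k -> GP x y k'.
Proof.
move=> Tx Ty hk [h1 h2 h3].
rewrite /GP (pref_split _ hk).
have [a1 b1] := pre_ext (drop k (pref (g_w x) k')) Tx h1.
have [a2 b2] := pre_ext (drop k (pref (g_w x) k')) Ty h2.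
by split=> //; rewrite b1 b2 h3.
Qed.

Lemma germ_sym x y : germ_eq x y -> germ_eq y x.
Proof.
move=> /germ_eqP [e [k [h1 h2 h3]]]; apply/germ_eqP; split=> [i|]; first by rewrite e.
exists k; rewrite /GP -(pref_ext k e); by split.
Qed.

Lemma germ_trans x y z : TA (t_g (g_s x)) -> TA (t_g (g_s y)) -> TA (t_g (g_s z)) ->
  germ_eq x y -> germ_eq y z -> germ_eq x z.
Proof.
move=> Tx Ty Tz /germ_eqP [e1 [k1 G1]] /germ_eqP [e2 [k2 G2]].
apply/germ_eqP; split=> [i|]; first by rewrite e1 e2.
exists (maxn k1 k2).
have [a1 a2 a3] := GP_mono Tx Ty (leq_maxl k1 k2) G1.
have [b1 b2 b3] := GP_mono Ty Tz (leq_maxr k1 k2) G2.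
rewrite /GP -(pref_ext _ e1) in b1 b2 b3.
by split=> //; rewrite a3.
Qed.

Section More.
Variables (F : finFieldType) (n : nat) (alpha : F).
Local Notation I := (iota_act n alpha).

Lemma restr_I_ones k c : restr (I c) (nseq k true) = I (alpha ^+ k * c).
Proof.
elim: k c => [|k IH] c; first by rewrite restr_nil expr0 mul1r.
rewrite -[nseq k.+1 true]/([:: true] ++ nseq k true) restr_cat restr_I_true IH.
by rewrite mulrA -exprSr.
Qed.

Lemma I_ones k c : I c (nseq k true) = nseq k true.
Proof. by elim: k c => [|k IH] c //=; rewrite IH. Qed.

Lemma I_head c x r : exists r', I c (x :: r) = x :: r'.
Proof. by case: x; eexists; reflexivity. Qed.

Lemma N0_fix f rho : N0 n alpha f -> f rho = rho -> restr f rho = id ->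
  exists b, f = I b.
Proof.
move=> Nf hf hr.
have hnil : forall h, restr h [::] = id -> h [:: true] = [:: true].
  by move=> h; rewrite restr_nil => ->.
case: Nf => [[//|ha]|[b [hb|hb]]]; subst f.
- case: rho hf hr => [_ /hnil //|x r]; by case: x.
- case: rho hf hr => [_ /hnil //|x r] /=.
  by case: x.
- case: rho hf hr => [_ /hnil //|x r] /=.
  by case: x.
Qed.

End More.

Unset Implicit Arguments.

Theorem mainTheorem8 (n : nat) (hn : (2 <= n)%N)
  (F : finFieldType) (hchar : (2 \in [pchar F])%N) (hcard : #|F| = (2 ^ n)%N)
  (alpha : F) (halpha : ((2 ^ n).-1).-primitive_root alpha)
  (gamma mu eta : seq bool) (g : seq bool -> seq bool)
  (hg : inGn n alpha g) :
  let D := Theta n alpha (Triple gamma g mu) (cyl (mu ++ eta)) in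
  gclosure n alpha D (z_ (iota_act n alpha 0)) ->
  exists (mD : nat) (bD : F),
    forall x : germ,
      (D x /\ exists h : F, U_ n alpha mD (iota_act n alpha h) x) <->
      U_ n alpha mD (iota_act n alpha bD) x.
Proof.
move=> D hcl; rewrite /D in hcl *.
have Tv : forall x, valid_germ n alpha x -> TA (t_g (g_s x)).
  by move=> x v; exact: (Inv_Gn hchar hcard hn v.1).1.
have [Tg [R HR]] := Inv_Gn hchar hcard hn hg.
pose m := (size mu + size eta + R)%N.
have hle : (size mu + size eta <= m)%N := leq_addr _ _.
have hjm : (size mu <= m)%N := leq_trans (leq_addr _ _) hle.
pose s0 := Triple [::] (iota_act n alpha 0) [::].
have T0 : TA (t_g s0) := TA_iota n alpha 0.
have Oopen : gopen n alpha (U_ n alpha m (iota_act n alpha 0)).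
  move=> x Ox; exists s0, (cyl (ones_m m)); split => //.
  - exact: Gn_iota.
  - move=> w cw; exists m => w' cw'.
    move: cw cw'; rewrite /cyl /ones_m size_nseq size_mkseq => cw cw'.
    by rewrite -/(pref w m) in cw'; rewrite cw' cw.
have Oz : U_ n alpha m (iota_act n alpha 0) (z_ (iota_act n alpha 0)).
  split; first by split; [exact: Gn_iota | by []].
  exists ones; split; first by rewrite /cyl /ones_m size_nseq /pref mkseq_true.
  split; first by [].
  by apply/germ_eqP; split=> //; exists 0%N; split.
have [y [Oy Dy]] := hcl.2 _ Oopen Oz.
case: Oy => vy [w1 [cw1 [_ e1]]].
case: Dy => _ [w2 [cw2 [cmu2 e2]]].
have Ty := Tv _ vy.
have e21 := @germ_trans (Germ (Triple gamma g mu) w2) y (Germ s0 w1) Tg Ty T0 (germ_sym e2) e1.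
have /germ_eqP [ew [k0 G0]] := e21.
have [p1 p2 p3] := @GP_mono (Germ (Triple gamma g mu) w2) (Germ s0 w1) k0 (maxn k0 m) Tg T0 (leq_maxl k0 m) G0.
rewrite /= in p1 p2 p3.
have hw2 : pref w2 m = nseq m true.
  by move: cw1; rewrite /cyl /ones_m size_nseq (pref_ext _ ew).
have hme : mu ++ eta = nseq (size mu + size eta) true.
  move: cw2; rewrite /cyl size_cat => <-.
  by rewrite -(pref_take w2 hle) hw2 take_nseq.
have hmu : mu = nseq (size mu) true.
  by have := f_equal (take (size mu)) hme; rewrite take_size_cat // take_nseq // leq_addr.
have e1m : nseq m true = nseq (size mu) true ++ nseq (m - size mu) true.
  by rewrite -nseqD subnKC.
have hnu := pref_split w2 (leq_maxr k0 m).
rewrite hw2 in hnu.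
set nu := pref w2 (maxn k0 m) in p1 p2 p3 hnu.
set rho := drop m nu in hnu.
have heps : drop (size mu) nu = nseq (m - size mu) true ++ rho.
  by rewrite {1}hnu e1m -catA drop_size_cat // size_nseq.
rewrite /val /= heps drop0 I0 restr_id in p3.
case: p3 => hA hB.
have Nf : N0 n alpha (restr g (nseq (m - size mu) true)).
  by apply: HR; rewrite size_nseq /m -addnA addKn leq_addl.
rewrite (TA_cat _ _ Tg) catA {1}hnu in hA.
have sz : size (gamma ++ g (nseq (m - size mu) true)) = size (nseq m true).
  have := f_equal size hA; rewrite !size_cat ((TA_restr _ Tg).1).
  by move/eqP; rewrite eqn_add2r => /eqP.
move/eqP: hA; rewrite eqseq_cat // => /andP [/eqP hpre /eqP hfix].
rewrite restr_cat in hB.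
have [b hb] := N0_fix Nf hfix hB.
have a0 : alpha != 0.
  apply/eqP => a0; have := prim_expr_order halpha; rewrite a0.
  have h2 : (2 ^ 1 <= 2 ^ n)%N by rewrite leq_exp2l // ltnW.
  case E: (2 ^ n)%N h2 => [|[|k]] // _.
  by rewrite expr0n /= => /eqP; rewrite eq_sym oner_eq0.
pose bD := b / alpha ^+ m.
have hbD : alpha ^+ m * bD = b by rewrite /bD mulrC divfK // expf_neq0.
exists m, bD.
have core : forall w, cyl (ones_m m) w -> cyl (mu ++ eta) w /\
    germ_eq (Germ (Triple gamma g mu) w) (Germ (Triple [::] (iota_act n alpha bD) [::]) w).
  move=> w cw.
  have hw : pref w m = nseq m true by move: cw; rewrite /cyl /ones_m size_nseq.
  split.
    by rewrite /cyl size_cat -(pref_take w hle) hw take_nseq // -hme.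
  apply/germ_eqP; split => //; exists m; rewrite /GP /= hw; split.
  - by rewrite /pre /= {1}hmu drop_nseq -nseqD subnKC.
  - by rewrite /pre /= drop0.
  - by rewrite /val /= drop0 drop_nseq hpre hb I_ones restr_I_ones hbD.
move=> x; split.
  case=> [[vx [w' [cw' [cmu' ex']]]] [h [_ [w [cw [_ ex]]]]]].
  have /germ_eqP [exw' _] := ex'.
  have /germ_eqP [exw _] := ex.
  have cw'm : cyl (ones_m m) w'.
    apply: (cyl_ext _ cw) => i.
    have a1 : g_w x i = w i := exw i.
    have a2 : g_w x i = w' i := exw' i.
    by rewrite -a1 a2.
  have [_ c'] := core w' cw'm.
  split => //; exists w'; split => //; split => //.
  exact: (@germ_trans x (Germ (Triple gamma g mu) w') (Germ (Triple [::] (iota_act n alpha bD) [::]) w') (Tv _ vx) Tg (TA_iota n alpha bD) ex' c').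
case=> vx [w [cw [_ ex]]].
have [cme c'] := core w cw.
split; last by exists bD; split => //; exists w.
split => //; exists w; split => //; split.
  move: cme; rewrite /cyl size_cat => h.
  by rewrite -(pref_take w (leq_addr (size eta) (size mu))) h take_size_cat.
exact: (@germ_trans x (Germ (Triple [::] (iota_act n alpha bD) [::]) w) (Germ (Triple gamma g mu) w) (Tv _ vx) (TA_iota n alpha bD) Tg ex (germ_sym c')).
Qed.
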